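(* Let $G$ be a graph, $q\in\mathcal Q(G)$, $F$ a graph with $F\to G$, and let $T_n$ ($n\ge1$) be the graphs defined below. Then \[ \lim_{n\to\infty}\log_n\hom(F,T_n)=\max_{\varphi\in\mathsf{Hom}(F,G)}\sum_{A\subseteq V_G} q(A)\cdot\mathsf{CC}\big(F|_{\varphi^{-1}(A)}\big). \]
   Context: Graphs are finite directed graphs $G=(V_G,E_G)$ with $V_G$ nonempty finite and $E_G\subseteq V_G\times V_G$. Homomorphisms are vertex maps sending edges to edges; $\mathsf{Hom}(F,G)$ is their set, $\hom$ its size, $F\to G$ means $\hom(F,G)\ge 1$. $F|_B$ is the induced subgraph on $B$ and $\mathsf{CC}$ the number of connected components ignoring directions, with $\mathsf{CC}(F|_\emptyset)=0$. $\mathcal Q(G)$ is the set of $q:\wp(V_G)\to\mathbb R$ with $q(\emptyset)=0$, $q\ge0$, and $\sum_{A\subseteq V_G}q(A)\,\mathsf{CC}(G|_A)=1$. For $q\in\mathcal Q(G)$ and $n\ge1$, $T_n$ is the graph whose vertices are pairs $(x,i)$ with $x\in V_G$ and $i:\{A\subseteq V_G:x\in A\}\to\{0,1,2,\dots\}$ with $i(A)<n^{q(A)}$, and with an edge from $(x,i)$ to $(y,j)$ iff $(x,y)\in E_G$ and $i(A)=j(A)$ for every $A$ with $\{x,y\}\subseteq A\subseteq V_G$. *)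

(* Defs.v *)
From Stdlib Require Import Reals.
From HB Require Import structures.
From mathcomp Require Import all_boot.

Set Implicit Arguments.
Unset Strict Implicit.
Unset Printing Implicit Defensive.

(* A finite directed graph (loops allowed): a finite vertex type and an edge relation.
   Nonemptiness of the vertex set is imposed as an explicit hypothesis where needed. *)
Record graph := Graph { vtx : finType; edg : rel vtx }.

Definition is_hom (F G : graph) (f : {ffun vtx F -> vtx G}) : bool :=
  [forall u, forall v, edg u v ==> edg (f u) (f v)].

Definition hom (F G : graph) : nat := #|[set f : {ffun vtx F -> vtx G} | is_hom f]|.

(* Number of connected components (ignoring edge directions) of the induced
   subgraph F|_B; CC(F|_emptyset) = 0. *)
Definition induced_undirected (F : graph) (B : {set vtx F}) : rel (vtx F) :=
  fun u v => [&& u \in B, v \in B & edg u v || edg v u].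
Definition CC (F : graph) (B : {set vtx F}) : nat := n_comp (induced_undirected B) B.

Definition inQ (G : graph) (q : {set vtx G} -> R) : Prop :=
  q set0 = R0 /\ (forall A, Rle R0 (q A)) /\
  \big[Rplus/R0]_(A : {set vtx G}) Rmult (q A) (INR (CC A)) = R1.

Definition npow (n : nat) (x : R) : R := Rpower (INR n) x.

(* A uniform natural bound K with n^{q(A)} < K for all A, so that all indices i(A)
   (which satisfy i(A) < n^{q(A)}) lie in 'I_K.  This is only a carrier; the actual
   constraint is the real inequality in Tvert_ok below. *)
Definition Tbound (G : graph) (q : {set vtx G} -> R) (n : nat) : nat :=
  Z.to_nat (up (\big[Rmax/R0]_(A : {set vtx G}) npow n (q A))).

(* Vertices (x, i) of T_n: i is a function on the sets A containing x with
   i(A) < n^{q(A)}; it is represented as a total function normalised to 0 on the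
   sets A not containing x (a bijective encoding). *)
Definition Tvert_ok (G : graph) (q : {set vtx G} -> R) (n : nat)
  (p : vtx G * {ffun {set vtx G} -> 'I_(Tbound q n)}) : bool :=
  [forall A : {set vtx G},
     if p.1 \in A then (if Rlt_dec (INR (p.2 A)) (npow n (q A)) then true else false)
     else nat_of_ord (p.2 A) == 0%N].

Definition Tvert (G : graph) (q : {set vtx G} -> R) (n : nat) : finType :=
  {p : vtx G * {ffun {set vtx G} -> 'I_(Tbound q n)} | @Tvert_ok G q n p}.

Definition Tedge (G : graph) (q : {set vtx G} -> R) (n : nat) : rel (@Tvert G q n) :=
  fun a b => edg (val a).1 (val b).1 &&
    [forall A : {set vtx G}, ((val a).1 \in A) && ((val b).1 \in A) ==>
                             (nat_of_ord ((val a).2 A) == nat_of_ord ((val b).2 A))].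

Definition T (G : graph) (q : {set vtx G} -> R) (n : nat) : graph :=
  @Graph (@Tvert G q n) (@Tedge G q n).

Definition logn_R (n : nat) (x : R) : R := Rdiv (ln x) (ln (INR n)).

Definition hom_value (F G : graph) (q : {set vtx G} -> R) (phi : {ffun vtx F -> vtx G}) : R :=
  \big[Rplus/R0]_(A : {set vtx G}) Rmult (q A) (INR (CC [set u | phi u \in A])).

(* Main.v *)
Require Import Defs.
From Stdlib Require Import Reals Lra Lia ZArith.
From HB Require Import structures.
From mathcomp Require Import all_boot.

Set Implicit Arguments.
Unset Strict Implicit.
Unset Printing Implicit Defensive.

Delimit Scope R_scope with Re.
Definition ltRb (a b : R) : bool := if Rlt_dec a b then true else false.

Lemma ltRbP (a b : R) : reflect (a < b)%Re (ltRb a b).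
Proof. rewrite /ltRb; case: Rlt_dec => h; [exact: ReflectT | exact: ReflectF]. Qed.

Lemma bigRmax_ge (I : eqType) (r : seq I) (F : I -> R) i :
  i \in r -> (F i <= \big[Rmax/R0]_(j <- r) F j)%Re.
Proof.
elim: r => [|j r IH] //=; rewrite inE big_cons => /orP[/eqP->|/IH h].
  exact: Rmax_l.
apply: Rle_trans h _; exact: Rmax_r.
Qed.

Lemma bigRmax_ge0 (I : eqType) (r : seq I) (F : I -> R) :
  (0 <= \big[Rmax/R0]_(j <- r) F j)%Re.
Proof.
elim: r => [|j r IH]; first by rewrite big_nil; apply: Rle_refl.
rewrite big_cons; apply: Rle_trans IH _; exact: Rmax_r.
Qed.

Section Count.
Variables (G F : graph) (q : {set vtx G} -> R) (n : nat).
Local Notation VG := (vtx G).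
Local Notation VF := (vtx F).
Local Notation K := (Tbound q n).
Local Notation TT := (T q n).
Local Notation TV := (vtx TT).

Definition xA (A : {set VG}) := npow n (q A).

Lemma xA_pos A : (0 < xA A)%Re.
Proof. rewrite /xA /npow /Rpower; exact: exp_pos. Qed.

Lemma Tbound_gt A : (xA A < INR K)%Re.
Proof.
rewrite /Tbound.
set m := \big[Rmax/R0]_(B : {set VG}) npow n (q B).
have h1 : (xA A <= m)%Re by apply: bigRmax_ge; rewrite mem_index_enum.
have h0 : (0 <= m)%Re by apply: bigRmax_ge0.
have [hu _] := archimed m.
have hz : (0 <= up m)%Z by apply: le_IZR; lra.
rewrite INR_IZR_INZ Z2Nat.id //; lra.
Qed.

Lemma K_gt0 : 0 < K.
Proof.
have := Tbound_gt set0; have := xA_pos set0.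
case: (Tbound q n) => //= h1 h2; lra.
Qed.

Definition k0 : 'I_K := Ordinal K_gt0.

Lemma cnt_ex A : exists k, ~~ ltRb (INR k) (xA A).
Proof. exists K; apply/ltRbP; have := Tbound_gt A; lra. Qed.

Definition cnt A := ex_minn (cnt_ex A).

Lemma cntP A k : (k < cnt A) = ltRb (INR k) (xA A).
Proof.
rewrite /cnt; case: ex_minnP => m hm hmin.
case: (boolP (ltRb (INR k) (xA A))) => hk.
  case: ltnP => // hle; exfalso.
  move/ltRbP: hm => hm; move/ltRbP: hk => hk; apply: hm.
  apply: Rle_lt_trans hk; apply: le_INR; exact/leP.
apply/negbTE; rewrite -leqNgt; exact: hmin.
Qed.

Lemma cnt_leK A : cnt A <= K.
Proof.
rewrite /cnt; case: ex_minnP => m hm hmin; apply: hmin.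
apply/ltRbP; have := Tbound_gt A; lra.
Qed.

Lemma cnt_gt0 A : 0 < cnt A.
Proof. rewrite cntP; apply/ltRbP; have := xA_pos A; rewrite /=; lra. Qed.

Lemma cnt_lb A : (xA A <= INR (cnt A))%Re.
Proof.
have := cntP A (cnt A); rewrite ltnn => /esym/negbT/ltRbP; lra.
Qed.

Lemma cnt_ub A : (INR (cnt A) < xA A + 1)%Re.
Proof.
have h := cnt_gt0 A.
have := cntP A (cnt A).-1; rewrite prednK // leqnn => /esym/ltRbP.
rewrite -(prednK h) S_INR /=; lra.
Qed.

Lemma card_ord_lt c : c <= K -> #|[pred k : 'I_K | k < c]| = c.
Proof.
move=> hc.
have h : [pred k : 'I_K | k < c] =i [set widen_ord hc i | i : 'I_c].
  move=> k; rewrite inE; apply/idP/imsetP => [hk|[i _ ->]] /=.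
    by exists (Ordinal hk) => //; apply: val_inj.
  exact: ltn_ord.
by rewrite (eq_card h) card_imset ?card_ord //; by move=> i j /(congr1 val) /= ?; apply: val_inj.
Qed.


Definition Bs (phi : {ffun VF -> VG}) (A : {set VG}) : {set VF} := [set u | phi u \in A].
Definition eA phi A := induced_undirected (Bs phi A).
Definition isroot phi A u := (u \in Bs phi A) && (root (eA phi A) u == u).

Lemma eA_sym phi A : connect_sym (eA phi A).
Proof.
apply: sym_connect_sym => u v; rewrite /eA /induced_undirected.
by rewrite andbCA orbC.
Qed.

Lemma eA_closed phi A : closed (eA phi A) (Bs phi A).
Proof. by move=> u v /and3P[hu hv _]; rewrite hu hv. Qed.

Lemma root_in phi A u : u \in Bs phi A -> root (eA phi A) u \in Bs phi A.
Proof.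
move=> hu.
by rewrite -(closed_connect (@eA_closed phi A) (connect_root _ u)).
Qed.

Lemma isroot_root phi A u : u \in Bs phi A -> isroot phi A (root (eA phi A) u).
Proof. move=> hu; apply/andP; split; [exact: root_in | exact/eqP/(root_root (eA_sym phi A))]. Qed.

Lemma CC_isroot phi A : CC (Bs phi A) = #|[pred u | isroot phi A u]|.
Proof. rewrite /CC; apply: eq_card => u; rewrite !inE /isroot andbC inE. done. Qed.

Definition proj (f : {ffun VF -> TV}) : {ffun VF -> VG} := [ffun u => (val (f u)).1].
Definition fiber phi := [set f : {ffun VF -> TV} | @is_hom F TT f & proj f == phi].

Lemma hom_step (f : {ffun VF -> TV}) (A : {set VG}) u w : @is_hom F TT f -> edg u w ->
  (val (f u)).1 \in A -> (val (f w)).1 \in A -> (val (f u)).2 A = (val (f w)).2 A.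
Proof.
move=> hf huw hu hw.
have := implyP (forallP (forallP hf u) w) huw => /andP[_ /forallP /(_ A)].
by rewrite hu hw /= => /eqP h; apply: val_inj.
Qed.

Lemma proj_hom f : @is_hom F TT f -> is_hom (proj f).
Proof.
move=> hf; apply/forallP => u; apply/forallP => v; apply/implyP => huv.
have := implyP (forallP (forallP hf u) v) huv => /andP[h _].
by rewrite !ffunE.
Qed.

Lemma fiber_const phi A f u v : f \in fiber phi -> connect (eA phi A) u v ->
  (val (f u)).2 A = (val (f v)).2 A.
Proof.
rewrite inE => /andP[hf /eqP hp] /connectP[p hpath ->] {v}.
elim: p u hpath => //= w p IH u /andP[huw hpath]; rewrite -(IH w hpath).
move: huw => /and3P[hu hw he].
have pu : (val (f u)).1 \in A by move: hu; rewrite inE -hp ffunE.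
have pw : (val (f w)).1 \in A by move: hw; rewrite inE -hp ffunE.
case/orP: he => he; first exact: hom_step.
by apply: esym; apply: hom_step.
Qed.

Lemma ok_in A (k : 'I_K) : k < cnt A ->
  (if Rlt_dec (INR k) (npow n (q A)) then true else false).
Proof. by rewrite cntP. Qed.

Definition decv (phi : {ffun VF -> VG}) (g : {ffun {set VG} -> {ffun VF -> 'I_K}}) u : {ffun {set VG} -> 'I_K} :=
  [ffun A : {set VG} => if phi u \in A then
     (if g A (root (eA phi A) u) < cnt A then g A (root (eA phi A) u) else k0) else k0].

Lemma decv_ok (phi : {ffun VF -> VG}) (g : {ffun {set VG} -> {ffun VF -> 'I_K}}) u : @Tvert_ok G q n (phi u, decv phi g u).
Proof.
apply/forallP => A /=; rewrite /decv ffunE.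
case hA: (phi u \in A) => //.
case hr: (g A (root (eA phi A) u) < cnt A); apply: ok_in; [by [] | exact: cnt_gt0].
Qed.

Definition dec (phi : {ffun VF -> VG}) (g : {ffun {set VG} -> {ffun VF -> 'I_K}}) : {ffun VF -> TV} :=
  [ffun u => (exist _ (phi u, decv phi g u) (decv_ok phi g u) : Tvert q n)].

Lemma dec_in phi g : is_hom phi -> dec phi g \in fiber phi.
Proof.
move=> hphi; rewrite inE; apply/andP; split; last first.
  by apply/eqP/ffunP => u; rewrite !ffunE.
apply/forallP => u; apply/forallP => v; apply/implyP => huv.
rewrite !ffunE /= /Tedge /=; apply/andP; split.
  exact: (implyP (forallP (forallP hphi u) v)).
apply/forallP => A; apply/implyP => /andP[hu hv].
rewrite /decv !ffunE hu hv.
have -> : root (eA phi A) u = root (eA phi A) v.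
  apply/(rootP (eA_sym phi A)); apply: connect1.
  by rewrite /eA /induced_undirected !inE hu hv huv.
by [].
Qed.

Definition Sset phi := [set g : {ffun {set VG} -> {ffun VF -> 'I_K}} |
  g \in family (fun A => [pred h : {ffun VF -> 'I_K} |
     h \in family (fun u => [pred k : 'I_K | if isroot phi A u then k < cnt A else k == k0])])].

Lemma dec_inj phi : {in Sset phi &, injective (dec phi)}.
Proof.
move=> g1 g2; rewrite !inE => /familyP h1 /familyP h2 heq.
apply/ffunP => A; apply/ffunP => u.
have /familyP h1A := h1 A; have /familyP h2A := h2 A.
move: (h1A u) (h2A u); rewrite !inE.
case: (boolP (isroot phi A u)) => hr a1 a2; last by rewrite (eqP a1) (eqP a2).
have := congr1 (fun f : {ffun VF -> TV} => (val (f u)).2 A) heq.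
move: hr; rewrite /isroot inE => /andP[hA /eqP hroot].
by rewrite /dec !ffunE /= hA hroot a1 a2.
Qed.

Definition enc (phi : {ffun VF -> VG}) (f : {ffun VF -> TV}) : {ffun {set VG} -> {ffun VF -> 'I_K}} :=
  [ffun A : {set VG} => [ffun u => if isroot phi A u then (val (f u)).2 A else k0]].

Lemma tv_in (a : TV) (A : {set VG}) : (val a).1 \in A -> (val a).2 A < cnt A.
Proof.
move=> h; have := forallP (valP a) A; rewrite h /= => H.
by rewrite cntP; exact: H.
Qed.

Lemma tv_out (a : TV) (A : {set VG}) : (val a).1 \notin A -> (val a).2 A = k0.
Proof.
move=> h; have := forallP (valP a) A; rewrite (negbTE h) /= => /eqP H.
exact: val_inj.
Qed.

Lemma enc_in phi f : f \in fiber phi -> enc phi f \in Sset phi.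
Proof.
move=> hf; have := hf; rewrite inE => /andP[_ /eqP hp].
rewrite inE; apply/familyP => A; rewrite inE; apply/familyP => u; rewrite inE !ffunE.
case hr: (isroot phi A u) => //; apply: tv_in.
move: hr; rewrite /isroot inE => /andP[h _]; by rewrite -hp ffunE in h.
Qed.

Lemma enc_inj phi : {in fiber phi &, injective (enc phi)}.
Proof.
move=> f1 f2 hf1 hf2 heq; apply/ffunP => u; apply: val_inj.
have := hf1; rewrite inE => /andP[_ /eqP hp1].
have := hf2; rewrite inE => /andP[_ /eqP hp2].
have p1 : (val (f1 u)).1 = phi u by rewrite -hp1 ffunE.
have p2 : (val (f2 u)).1 = phi u by rewrite -hp2 ffunE.
have e2 : (val (f1 u)).2 = (val (f2 u)).2.
  apply/ffunP => A; case: (boolP (phi u \in A)) => hA; last first.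
    by rewrite !tv_out ?p1 ?p2.
  have hu : u \in Bs phi A by rewrite inE.
  set r := root (eA phi A) u.
  have c : connect (eA phi A) u r by apply: connect_root.
  rewrite (fiber_const hf1 c) (fiber_const hf2 c).
  have := congr1 (fun g : {ffun {set VG} -> {ffun VF -> 'I_K}} => g A r) heq.
  by rewrite /enc !ffunE isroot_root.
move: e2; rewrite -p2 in p1; move: p1.
by case: (val (f1 u)) => a b; case: (val (f2 u)) => c d /= -> ->.
Qed.

Lemma card_fiber phi : is_hom phi -> #|fiber phi| = #|Sset phi|.
Proof.
move=> hphi; apply/eqP; rewrite eqn_leq; apply/andP; split.
  rewrite -(card_in_imset (@enc_inj phi)); apply: subset_leq_card.
  by apply/subsetP => _ /imsetP[f hf ->]; apply: enc_in.
rewrite -(card_in_imset (@dec_inj phi)); apply: subset_leq_card.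
by apply/subsetP => _ /imsetP[g _ ->]; apply: dec_in.
Qed.


Lemma card_S phi : #|Sset phi| = \prod_(A : {set VG}) cnt A ^ CC (Bs phi A).
Proof.
rewrite cardsE card_family foldrE big_map big_enum /=.
apply: eq_bigr => A _.
have -> : #|in_mem^~ (mem (family (fun u : VF =>
   [pred k : 'I_K | if isroot phi A u then k < cnt A else k == k0])))| =
   #|(family (fun u : VF =>
   [pred k : 'I_K | if isroot phi A u then k < cnt A else k == k0]) : simpl_pred {ffun VF -> 'I_K})|.
  by apply: eq_card.
rewrite card_family foldrE big_map big_enum /= CC_isroot -prod_nat_const [RHS]big_mkcond /=.
apply: eq_bigr => u _; rewrite inE.
case: ifP => _; first by rewrite card_ord_lt // cnt_leK.
by rewrite -(card1 k0); apply: eq_card => k; rewrite !inE.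
Qed.

Lemma hom_T_formula :
  hom F TT = \sum_(phi | is_hom phi) \prod_(A : {set VG}) cnt A ^ CC (Bs phi A).
Proof.
rewrite /hom -sum1_card (partition_big proj (fun phi => is_hom phi)) /=; last first.
  by move=> f; rewrite inE; apply: proj_hom.
apply: eq_bigr => phi hphi; rewrite -card_S -card_fiber // -sum1_card.
by apply: eq_bigl => f; rewrite !inE.
Qed.
End Count.

Lemma ln_le (x y : R) : (0 < x)%Re -> (x <= y)%Re -> (ln x <= ln y)%Re.
Proof.
move=> hx [h|<-]; [left; exact: ln_increasing | right; reflexivity].
Qed.

Lemma exp_le (x y : R) : (x <= y)%Re -> (exp x <= exp y)%Re.
Proof. move=> [h|<-]; [left; exact: exp_increasing | right; reflexivity]. Qed.

Lemma INR_expn c k : INR (c ^ k) = (INR c ^ k)%Re.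
Proof. elim: k => [|k IH] //; by rewrite expnS -multE mult_INR IH. Qed.

Lemma bigR_le (I : Type) (r : seq I) (P : pred I) (F1 F2 : I -> R) :
  (forall i, P i -> (F1 i <= F2 i)%Re) ->
  (\big[Rplus/R0]_(i <- r | P i) F1 i <= \big[Rplus/R0]_(i <- r | P i) F2 i)%Re.
Proof.
move=> h; elim: r => [|x r IH]; first by rewrite !big_nil; right.
rewrite !big_cons; case hx: (P x) => //; apply: Rplus_le_compat => //; exact: h.
Qed.

Lemma bigR_lin (I : Type) (r : seq I) (P : pred I) (F1 F2 : I -> R) (a b : R) :
  \big[Rplus/R0]_(i <- r | P i) (a * F1 i + b * F2 i)%Re =
  (a * \big[Rplus/R0]_(i <- r | P i) F1 i + b * \big[Rplus/R0]_(i <- r | P i) F2 i)%Re.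
Proof.
elim: r => [|x r IH]; first by rewrite !big_nil; ring.
rewrite !big_cons; case hx: (P x) => //; rewrite IH; ring.
Qed.

Lemma bigR_INR (I : Type) (r : seq I) (P : pred I) (f : I -> nat) :
  INR (\sum_(i <- r | P i) f i) = \big[Rplus/R0]_(i <- r | P i) INR (f i).
Proof.
elim: r => [|x r IH]; first by rewrite !big_nil.
rewrite !big_cons; case hx: (P x) => //; by rewrite -plusE plus_INR IH.
Qed.

Lemma ln_prod (I : Type) (r : seq I) (P : pred I) (f : I -> nat) :
  (forall i, P i -> 0 < f i) ->
  0 < \prod_(i <- r | P i) f i /\
  ln (INR (\prod_(i <- r | P i) f i)) = \big[Rplus/R0]_(i <- r | P i) ln (INR (f i)).
Proof.
move=> h; elim: r => [|x r [IH1 IH2]]; first by rewrite !big_nil /= ln_1.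
rewrite !big_cons; case hx: (P x) => //; split; first by rewrite muln_gt0 h.
have h1 := h x hx.
rewrite -multE mult_INR ln_mult ?IH2 //; apply: lt_0_INR; exact/ltP.
Qed.

Section Analysis.
Variables (G F : graph) (q : {set vtx G} -> R).
Hypothesis hq0 : forall A, (0 <= q A)%Re.
Local Notation VG := (vtx G).
Local Notation VF := (vtx F).

Definition Pn n (phi : {ffun VF -> VG}) := \prod_(A : {set VG}) cnt q n A ^ CC (Bs phi A).
Definition wt (phi : {ffun VF -> VG}) := \sum_(A : {set VG}) CC (Bs phi A).

Lemma L_ge0 n : (1 <= n)%N -> (0 <= ln (INR n))%Re.
Proof.
move=> h; rewrite -ln_1; apply: ln_le; first lra.
have := le_INR 1 n; simpl; move=> H; apply: H; exact/leP.
Qed.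

Lemma xA_ge1 n A : (1 <= n)%N -> (1 <= xA q n A)%Re.
Proof.
move=> h; rewrite /xA /npow /Rpower -exp_0; apply: exp_le.
apply: Rmult_le_pos; [exact: hq0 | exact: L_ge0].
Qed.

Lemma lncnt_lb n A : (q A * ln (INR n) <= ln (INR (cnt q n A)))%Re.
Proof.
rewrite -(ln_Rpower (INR n)) -/(npow n (q A)) -/(xA q n A).
apply: ln_le; [exact: xA_pos | exact: cnt_lb].
Qed.

Lemma lncnt_ub n A : (1 <= n)%N ->
  (ln (INR (cnt q n A)) <= ln 2 + q A * ln (INR n))%Re.
Proof.
move=> hn; rewrite -(ln_Rpower (INR n)) -/(npow n (q A)) -/(xA q n A).
have h1 := xA_ge1 A hn; have h2 := cnt_ub q n A.
have h3 : (0 < INR (cnt q n A))%Re by apply: lt_0_INR; apply/ltP; exact: cnt_gt0.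
rewrite -ln_mult; [|lra|lra]; apply: ln_le; lra.
Qed.

Lemma lnPn n phi : 0 < Pn n phi /\
  ln (INR (Pn n phi)) =
  \big[Rplus/R0]_(A : {set VG}) (INR (CC (Bs phi A)) * ln (INR (cnt q n A)))%Re.
Proof.
have hpos : forall A : {set VG}, true -> 0 < cnt q n A ^ CC (Bs phi A).
  by move=> A _; rewrite expn_gt0 cnt_gt0.
have [h1 h2] := @ln_prod _ (index_enum {set VG}) (fun A => true)
  (fun A => cnt q n A ^ CC (Bs phi A)) hpos.
split; first exact: h1.
rewrite /Pn h2; apply: eq_bigr => A _.
rewrite INR_expn ln_pow //; apply: lt_0_INR; apply/ltP; exact: cnt_gt0.
Qed.

Lemma Pn_lb n phi : (ln (INR n) * hom_value q phi <= ln (INR (Pn n phi)))%Re.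
Proof.
have [_ ->] := lnPn n phi.
rewrite /hom_value.
have := @bigR_lin _ (index_enum {set VG}) (fun A => true)
  (fun A => q A * INR (CC [set u | phi u \in A]))%Re (fun A => 0%Re) (ln (INR n)) 0%Re.
move=> E.
apply: (Rle_trans _ (ln (INR n) * \big[Rplus/R0]_(A : {set VG}) (q A * INR (CC [set u | phi u \in A])) +
   0 * \big[Rplus/R0]_(A : {set VG}) 0)%Re); first by right; ring.
rewrite -E; apply: bigR_le => A _.
have := lncnt_lb n A; have := pos_INR (CC (Bs phi A)).
rewrite /Bs; nra.
Qed.

Lemma Pn_ub n phi : (1 <= n)%N ->
  (ln (INR (Pn n phi)) <= ln 2 * INR (wt phi) + ln (INR n) * hom_value q phi)%Re.
Proof.
move=> hn; have [_ ->] := lnPn n phi.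
rewrite /hom_value /wt bigR_INR -bigR_lin; apply: bigR_le => A _.
have := lncnt_ub A hn; have := pos_INR (CC (Bs phi A)).
rewrite /Bs; nra.
Qed.

End Analysis.

Lemma exists_max_seq (T : eqType) (P : pred T) (f : T -> R) (s : seq T) x0 : P x0 ->
  exists x, [/\ P x, (f x0 <= f x)%Re & forall y, y \in s -> P y -> (f y <= f x)%Re].
Proof.
move=> h0; elim: s => [|a s [x [hx hx0 hxs]]].
  by exists x0; split => //; right.
case hPa: (P a); last first.
  exists x; split => // y; rewrite inE => /orP[/eqP->|hy]; [by rewrite hPa | exact: hxs].
case: (Rlt_dec (f x) (f a)) => hlt.
  exists a; split => //; first lra.
  move=> y; rewrite inE => /orP[/eqP->|hy] hPy; first by right.
  have := hxs y hy hPy; lra.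
exists x; split => // y; rewrite inE => /orP[/eqP->|hy] hPy; first lra.
exact: hxs.
Qed.

Lemma exists_max (T : finType) (P : pred T) (f : T -> R) : (exists x, P x) ->
  exists x, P x /\ forall y, P y -> (f y <= f x)%Re.
Proof.
case=> x0 h0; have [x [hx _ hxs]] := exists_max_seq f (enum T) h0.
by exists x; split => // y; apply: hxs; rewrite mem_enum.
Qed.

Theorem corollary6p2 (G F : graph) (q : {set vtx G} -> R)
  (hG : 0 < #|vtx G|) (hF : 0 < #|vtx F|)
  (hq : inQ q) (hFG : 1 <= hom F G) :
  exists2 phi0 : {ffun vtx F -> vtx G}, is_hom phi0 &
    (forall phi : {ffun vtx F -> vtx G}, is_hom phi -> Rle (hom_value q phi) (hom_value q phi0)) /\
    Un_cv (fun n : nat => logn_R n (INR (hom F (T q n)))) (hom_value q phi0).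
Proof.
have [_ [hq0 _]] := hq.
have [phi1 hphi1] : exists phi : {ffun vtx F -> vtx G}, is_hom phi.
  by case/card_gt0P: hFG => phi; rewrite inE => h; exists phi.
have [phi0 [hphi0 hmax]] := exists_max (hom_value q) (ex_intro _ phi1 hphi1).
exists phi0 => //; split => //.
set M := hom_value q phi0.
set D := \big[Rplus/R0]_(phi : {ffun vtx F -> vtx G} | is_hom phi) exp (ln 2 * INR (wt phi)).
have hlow : forall n, (1 <= n)%N ->
    (0 < INR (hom F (T q n)))%Re /\ (ln (INR n) * M <= ln (INR (hom F (T q n))))%Re.
  move=> n hn.
  have hge : (Pn q n phi0 <= hom F (T q n))%N.
    rewrite hom_T_formula (bigD1 phi0) //=; exact: leq_addr.
  have [hP0 _] := lnPn q n phi0.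
  have hP0' : (0 < INR (Pn q n phi0))%Re by apply: lt_0_INR; exact/ltP.
  have hle : (INR (Pn q n phi0) <= INR (hom F (T q n)))%Re by apply: le_INR; exact/leP.
  split; first lra.
  apply: Rle_trans (Pn_lb q n phi0) _; exact: ln_le.
have hup : forall n, (1 <= n)%N ->
    (INR (hom F (T q n)) <= D * exp (ln (INR n) * M))%Re.
  move=> n hn; rewrite hom_T_formula bigR_INR.
  set E := exp (ln (INR n) * M).
  apply: (Rle_trans _ (\big[Rplus/R0]_(phi : {ffun vtx F -> vtx G} | is_hom phi)
        (E * exp (ln 2 * INR (wt phi)) + 0 * 0))%Re).
    apply: bigR_le => phi hphi.
    have [hP _] := lnPn q n phi.
    have hP' : (0 < INR (Pn q n phi))%Re by apply: lt_0_INR; exact/ltP.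
    rewrite -(exp_ln _ hP') /E -exp_plus Rmult_0_l Rplus_0_r.
    apply: exp_le; apply: Rle_trans (Pn_ub hq0 phi hn) _.
    have := hmax phi hphi; have := L_ge0 hn; rewrite -/M; nra.
  rewrite bigR_lin; apply: Req_le; rewrite /D Rmult_0_l Rplus_0_r Rmult_comm; reflexivity.
have hD : (1 <= D)%Re.
  have [h1 h2] := hlow 2%N isT; have h3 := hup 2%N isT.
  have h4 := exp_le h2; rewrite exp_ln // in h4.
  have h5 := exp_pos (ln (INR 2) * M); nra.
move=> eps heps.
set x := exp (ln D / eps).
have hx : (0 < x)%Re by apply: exp_pos.
have [hu _] := archimed x.
have hz : (0 <= up x)%Z by apply: le_IZR; lra.
exists (maxn 2 (Z.to_nat (up x))) => n hn.
move/leP: hn; rewrite geq_max => /andP[hn2 hnx].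
have hn1 : (1 <= n)%N by apply: leq_trans hn2.
have hINR : (x < INR n)%Re.
  apply: Rlt_le_trans hu _; rewrite -(Z2Nat.id _ hz) -INR_IZR_INZ.
  apply: le_INR; exact/leP.
have hL : (ln D / eps < ln (INR n))%Re.
  by rewrite -(ln_exp (ln D / eps)); apply: ln_increasing.
have hlnD : (0 <= ln D)%Re by rewrite -ln_1; apply: ln_le; lra.
have hLpos : (0 < ln (INR n))%Re.
  have : (0 <= ln D / eps)%Re by apply: Rmult_le_pos => //; left; apply: Rinv_0_lt_compat.
  lra.
have hlt : (ln D < eps * ln (INR n))%Re.
  have := Rmult_lt_compat_l eps _ _ heps hL.
  rewrite /Rdiv Rmult_comm Rmult_assoc Rinv_l; lra.
have [hpos ha1] := hlow n hn1.
have ha2 : (ln (INR (hom F (T q n))) <= ln D + ln (INR n) * M)%Re.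
  rewrite -(ln_exp (ln (INR n) * M)) -ln_mult; [|lra|exact: exp_pos].
  apply: ln_le => //; exact: hup.
rewrite /R_dist /logn_R.
set a := ln (INR (hom F (T q n))) in ha1 ha2 *.
set L := ln (INR n) in ha1 ha2 hlt hLpos *.
replace (a / L - M)%Re with ((a - L * M) * / L)%Re; last by field; apply: Rgt_not_eq.
have hinv : (0 < / L)%Re by apply: Rinv_0_lt_compat.
rewrite Rabs_right; last by apply: Rle_ge; apply: Rmult_le_pos; lra.
apply: (Rmult_lt_reg_r L) => //.
rewrite Rmult_assoc Rinv_l; lra.
Qed.
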